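(* Let $q\ge2$ and let $U$ be a dual-unitary operator on $\mathbb{C}^q\otimes\mathbb{C}^q$. Then $$\|\mathcal{M}_+^U\|_2^2=\|\mathcal{M}_-^U\|_2^2=1+(q^2-1)\bigl(1-e_p(U)\bigr),\qquad \|\mathcal{M}_+^U-\mathcal{P}\|_2^2=(q^2-1)\bigl(1-e_p(U)\bigr),$$ where $\mathcal{P}(a)=\operatorname{tr}(a)I/q$. In particular these norms are unchanged when $U$ is replaced by $(u_1\otimes u_2)U(v_1\otimes v_2)$ for any single-site unitaries $u_i,v_i\in U(q)$.
   Context: Product basis $|i\alpha\rangle=|i\rangle\otimes|\alpha\rangle$ of $\mathbb{C}^q\otimes\mathbb{C}^q$. For an operator $X$ define the realignment $\langle\beta\alpha|X^{R_1}|ji\rangle=\langle i\alpha|X|j\beta\rangle$. A unitary $U$ is dual-unitary if $U^{R_1}$ is unitary. $S$ is the swap, $S|\phi\rangle|\psi\rangle=|\psi\rangle|\phi\rangle$. The operator entanglement is $E(U)=1-q^{-4}\operatorname{tr}[(U^{R_1}U^{R_1\dagger})^2]$ and the entangling power is $e_p(U)=\frac{E(U)+E(US)-E(S)}{E(S)}$ with $E(S)=1-1/q^2$. The maps $\mathcal{M}_+^U(a)=\frac1q\operatorname{tr}_1[U^\dagger(a\otimes I)U]$ and $\mathcal{M}_-^U(a)=\frac1q\operatorname{tr}_2[U^\dagger(I\otimes a)U]$ act on $q\times q$ complex matrices. For a linear map $\mathcal{N}$ on $q\times q$ matrices, $\|\mathcal{N}\|_2^2=\sum_{j,l}\operatorname{tr}[\mathcal{N}(E_{jl})^\dagger\mathcal{N}(E_{jl})]$,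 with $E_{jl}=|j\rangle\langle l|$ the matrix units (Hilbert–Schmidt norm of the map w.r.t. the inner product $\operatorname{tr}(a^\dagger b)$). *)

(* Defs.v *)
(* Complex scalars: an arbitrary numClosedFieldType C
   (e.g. algC, or complex R for a real closed field R). *)
From HB Require Import structures.
From mathcomp Require Import all_boot all_order all_algebra.
From mathcomp Require Import sesquilinear spectral.
Set Implicit Arguments. Unset Strict Implicit. Unset Printing Implicit Defensive.
Import Order.TTheory GRing.Theory Num.Theory.
Local Open Scope ring_scope.
Local Open Scope sesquilinear_scope.

Section QuantumDefs.
Variables (C : numClosedFieldType) (q : nat).

(* basis vector |i alpha> = |i> (x) |alpha> of C^q (x) C^q *)
Definition pidx (i a : 'I_q) : 'I_(q * q) := mxvec_index i a.

Definition adj (X : 'M[C]_(q * q)) : 'M[C]_(q * q) := X ^t*.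
Definition adjq (X : 'M[C]_q) : 'M[C]_q := X ^t*.

Definition kron (A B : 'M[C]_q) : 'M[C]_(q * q) :=
  \sum_(i < q) \sum_(j < q) \sum_(a < q) \sum_(b < q)
     (A i j * B a b) *: delta_mx (pidx i a) (pidx j b).

Definition realign (X : 'M[C]_(q * q)) : 'M[C]_(q * q) :=
  \sum_(i < q) \sum_(a < q) \sum_(j < q) \sum_(b < q)
     X (pidx i a) (pidx j b) *: delta_mx (pidx b a) (pidx j i).

Definition dual_unitary (U : 'M[C]_(q * q)) : Prop :=
  U \is unitarymx /\ realign U \is unitarymx.

Definition swapq : 'M[C]_(q * q) :=
  \sum_(j < q) \sum_(b < q) delta_mx (pidx b j) (pidx j b).

Definition opEnt (U : 'M[C]_(q * q)) : C :=
  1 - (q%:R ^+ 4)^-1 * \tr ((realign U *m adj (realign U)) ^+ 2).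

Definition entPower (U : 'M[C]_(q * q)) : C :=
  (opEnt U + opEnt (U *m swapq) - opEnt swapq) / opEnt swapq.

Definition ptr1 (X : 'M[C]_(q * q)) : 'M[C]_q :=
  \matrix_(a, b) \sum_(i < q) X (pidx i a) (pidx i b).
Definition ptr2 (X : 'M[C]_(q * q)) : 'M[C]_q :=
  \matrix_(i, j) \sum_(a < q) X (pidx i a) (pidx j a).

Definition Mplus (U : 'M[C]_(q * q)) (x : 'M[C]_q) : 'M[C]_q :=
  q%:R^-1 *: ptr1 (adj U *m kron x 1%:M *m U).
Definition Mminus (U : 'M[C]_(q * q)) (x : 'M[C]_q) : 'M[C]_q :=
  q%:R^-1 *: ptr2 (adj U *m kron 1%:M x *m U).

Definition Pmap (x : 'M[C]_q) : 'M[C]_q := (\tr x / q%:R) *: 1%:M.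

Definition hs2 (N : 'M[C]_q -> 'M[C]_q) : C :=
  \sum_(j < q) \sum_(l < q) \tr (adjq (N (delta_mx j l)) *m N (delta_mx j l)).

End QuantumDefs.

(* Main.v *)
Require Import Defs.
From HB Require Import structures.
From mathcomp Require Import all_boot all_order all_algebra.
From mathcomp Require Import sesquilinear spectral.
From mathcomp Require Import ring zify.
Import Order.TTheory GRing.Theory Num.Theory.
Local Open Scope ring_scope.
Local Open Scope sesquilinear_scope.

Section Infra.
Variables (C : numClosedFieldType) (q : nat).
Implicit Types (A B X Y : 'M[C]_q).

Lemma eq_pidx (i a j b : 'I_q) : (pidx i a == pidx j b) = (i == j) && (a == b).
Proof.
rewrite /pidx /mxvec_index; apply/eqP/andP.
  by move/cast_ord_inj/enum_rank_inj => [-> ->].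
by case=> /eqP-> /eqP->.
Qed.

Lemma pidxP (k : 'I_(q * q)) : exists i a, k = pidx i a.
Proof. by case/mxvec_indexP: k => i a; exists i, a. Qed.

Lemma sum_pidx (V : nmodType) (F : 'I_(q * q) -> V) :
  \sum_k F k = \sum_i \sum_a F (pidx i a).
Proof.
rewrite pair_big /=.
rewrite (reindex (fun p : 'I_q * 'I_q => pidx p.1 p.2)) //=.
have [g Hg1 Hg2] := curry_mxvec_bij q q.
exists g => [[i a] _|k _]; first by have := Hg1 (i, a) isT.
  by have := Hg2 k isT; case: (g k).

Qed.

Definition unp (k : 'I_(q * q)) : 'I_q * 'I_q :=
  enum_val (cast_ord (esym (mxvec_cast q q)) k).

Lemma unpK i a : unp (pidx i a) = (i, a).
Proof. by rewrite /unp /pidx /mxvec_index cast_ordK enum_rankK. Qed.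

Lemma sum_if1 {V : nmodType} {n}  (k : 'I_n) (F : 'I_n -> V) :
  (forall i, i != k -> F i = 0) -> \sum_i F i = F k.
Proof. by move=> H; rewrite (bigD1 k) //= big1 ?addr0. Qed.

Lemma delta4E (c : 'I_q -> 'I_q -> 'I_q -> 'I_q -> C) i0 a0 j0 b0 :
  (\sum_i \sum_a \sum_j \sum_b c i a j b *: delta_mx (pidx i a) (pidx j b))
     (pidx i0 a0) (pidx j0 b0) = c i0 a0 j0 b0.
Proof.
set M := \matrix_(k, l) c (unp k).1 (unp k).2 (unp l).1 (unp l).2.
have -> : \sum_i \sum_a \sum_j \sum_b c i a j b *: delta_mx (pidx i a) (pidx j b)
   = M :> 'M[C]_(q * q).
  rewrite [RHS](matrix_sum_delta M). rewrite sum_pidx; apply: eq_bigr => i _.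
  apply: eq_bigr => a _; rewrite sum_pidx; apply: eq_bigr => j _.
  by apply: eq_bigr => b _; rewrite mxE !unpK.
by rewrite mxE !unpK.
Qed.

Lemma kronE A B i a j b : kron A B (pidx i a) (pidx j b) = A i j * B a b.
Proof.
rewrite /kron.
under eq_bigr do rewrite exchange_big.
by rewrite delta4E.
Qed.

Lemma realignE (X : 'M[C]_(q * q)) i a j b :
  realign X (pidx b a) (pidx j i) = X (pidx i a) (pidx j b).
Proof.
rewrite /realign.
(* i a j b -> b a j i *)
under eq_bigr do under eq_bigr do rewrite exchange_big.
under eq_bigr do rewrite exchange_big.
rewrite exchange_big.
under eq_bigr do rewrite exchange_big.
under eq_bigr do under eq_bigr do rewrite exchange_big.
by rewrite delta4E.
Qed.

Lemma swapE i a j b : swapq C q (pidx i a) (pidx j b) = ((i == b) && (a == j))%:R.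
Proof.
rewrite /swapq.
have -> : \sum_(j0 < q) \sum_(b0 < q) delta_mx (pidx b0 j0) (pidx j0 b0)
  = \sum_(i0 < q) \sum_(a0 < q) \sum_(j0 < q) \sum_(b0 < q)
      ((i0 == b0) && (a0 == j0))%:R *: delta_mx (pidx i0 a0) (pidx j0 b0) :> 'M[C]_(q*q).
  rewrite exchange_big; apply: eq_bigr => i0 _; apply: eq_bigr => a0 _.
  symmetry; rewrite (sum_if1 a0) => [|j0 Hj]; last first.
    by apply: big1 => b0 _; rewrite [a0 == j0]eq_sym (negbTE Hj) andbF scale0r.
  rewrite (sum_if1 i0) => [|b0 Hb]; last first.
    by rewrite eq_sym (negbTE Hb) scale0r.
  by rewrite !eqxx scale1r.
by rewrite delta4E.
Qed.

Lemma mulpE (X Y : 'M[C]_(q * q)) r c :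
  (X *m Y) r c = \sum_i \sum_a X r (pidx i a) * Y (pidx i a) c.
Proof. by rewrite mxE sum_pidx. Qed.

Lemma id_pE i a j b : (1%:M : 'M[C]_(q * q)) (pidx i a) (pidx j b) = ((i == j) && (a == b))%:R.
Proof. by rewrite mxE eq_pidx. Qed.

Lemma adjE (X : 'M[C]_(q * q)) r c : adj X r c = (X c r)^*.
Proof. by rewrite /adj !mxE. Qed.

Lemma adjqE X r c : adjq X r c = (X c r)^*.
Proof. by rewrite /adjq !mxE. Qed.

Lemma adjM (X Y : 'M[C]_(q * q)) : adj (X *m Y) = adj Y *m adj X.
Proof. by rewrite /adj trmx_mul map_mxM. Qed.

Lemma adjqM X Y : adjq (X *m Y) = adjq Y *m adjq X.
Proof. by rewrite /adjq trmx_mul map_mxM. Qed.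

Lemma kron_adj A B : adj (kron A B) = kron (adjq A) (adjq B).
Proof.
apply/matrixP => r c; have [i [a ->]] := pidxP r; have [j [b ->]] := pidxP c.
by rewrite adjE !kronE !adjqE rmorphM.
Qed.

Lemma kronM A B A' B' : kron A B *m kron A' B' = kron (A *m A') (B *m B').
Proof.
apply/matrixP => r c; have [i [a ->]] := pidxP r; have [j [b ->]] := pidxP c.
rewrite mulpE kronE !mxE big_distrl /=; apply: eq_bigr => k1 _.
rewrite big_distrr /=; apply: eq_bigr => k2 _.
by rewrite !kronE mulrACA.
Qed.

Lemma kron11 : kron (1%:M : 'M[C]_q) 1%:M = 1%:M.
Proof.
apply/matrixP => r c; have [i [a ->]] := pidxP r; have [j [b ->]] := pidxP c.
by rewrite kronE id_pE !mxE -natrM mulnb.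
Qed.

Lemma kronmulE A B (Y : 'M[C]_(q * q)) i a c :
  (kron A B *m Y) (pidx i a) c = \sum_j \sum_b A i j * B a b * Y (pidx j b) c.
Proof. by rewrite mulpE; apply: eq_bigr => j _; apply: eq_bigr => b _; rewrite kronE. Qed.

Lemma mulkronE A B (Y : 'M[C]_(q * q)) r j b :
  (Y *m kron A B) r (pidx j b) = \sum_i \sum_a Y r (pidx i a) * (A i j * B a b).
Proof. by rewrite mulpE; apply: eq_bigr => i _; apply: eq_bigr => a _; rewrite kronE. Qed.

Lemma ne_false {n} {i k : 'I_n} : k != i -> (i == k) = false.
Proof. by rewrite eq_sym => /negbTE. Qed.

Lemma sum_id1 (F : 'I_q -> C) i : \sum_k (1%:M : 'M[C]_q) i k * F k = F i.
Proof.
rewrite (sum_if1 i) => [|k Hk]; first by rewrite mxE eqxx mul1r.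
by rewrite mxE (ne_false Hk) mul0r.
Qed.

Lemma sum_id2 (F : 'I_q -> C) i : \sum_k (1%:M : 'M[C]_q) k i * F k = F i.
Proof.
rewrite (sum_if1 i) => [|k Hk]; first by rewrite mxE eqxx mul1r.
by rewrite mxE (negbTE Hk) mul0r.
Qed.

Lemma ptr1_lr (v w : 'M[C]_q) (X : 'M[C]_(q * q)) :
  ptr1 (kron 1%:M v *m X *m kron 1%:M w) = v *m ptr1 X *m w.
Proof.
apply/matrixP => m n; rewrite !mxE.
under eq_bigr do rewrite mulkronE.
under eq_bigr do under eq_bigr do under eq_bigr do rewrite kronmulE.
have H : forall i, \sum_k1 \sum_k2
   ((\sum_j \sum_b (1%:M : 'M[C]_q) i j * v m b * X (pidx j b) (pidx k1 k2)) *
    ((1%:M : 'M[C]_q) k1 i * w k2 n))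
   = \sum_k2 \sum_b v m b * X (pidx i b) (pidx i k2) * w k2 n.
  move=> i; rewrite (sum_if1 i) => [|k1 Hk]; last first.
    by apply: big1 => k2 _; rewrite mxE (negbTE Hk) mul0r mulr0.
  apply: eq_bigr => k2 _; rewrite mxE eqxx mul1r big_distrl /=.
  rewrite (sum_if1 i) => [|j Hj]; last first.
    by rewrite big1 ?mul0r // => b _; rewrite mxE (ne_false Hj) !mul0r.
  rewrite big_distrl /=.
  by apply: eq_bigr => b _; rewrite mxE eqxx mul1r.
under eq_bigr => i _ do rewrite H.
under [RHS]eq_bigr => k2 _ do rewrite !mxE big_distrl /=.
under [RHS]eq_bigr => k2 _ do under eq_bigr => b _ do rewrite !mxE big_distrr big_distrl /=.
rewrite exchange_big /=; apply: eq_bigr => k2 _.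
rewrite exchange_big /=; apply: eq_bigr => b _.
by [].
Qed.


Lemma ptr2_lr (v w : 'M[C]_q) (X : 'M[C]_(q * q)) :
  ptr2 (kron v 1%:M *m X *m kron w 1%:M) = v *m ptr2 X *m w.
Proof.
apply/matrixP => m n; rewrite !mxE.
under eq_bigr do rewrite mulkronE.
under eq_bigr do under eq_bigr do under eq_bigr do rewrite kronmulE.
have H : forall a, \sum_k1 \sum_k2
   ((\sum_j \sum_b v m j * (1%:M : 'M[C]_q) a b * X (pidx j b) (pidx k1 k2)) *
    (w k1 n * (1%:M : 'M[C]_q) k2 a))
   = \sum_k1 \sum_j v m j * X (pidx j a) (pidx k1 a) * w k1 n.
  move=> a; apply: eq_bigr => k1 _.
  rewrite (sum_if1 a) => [|k2 Hk]; last by rewrite mxE (negbTE Hk) !mulr0.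
  rewrite mxE eqxx mulr1 big_distrl /=; apply: eq_bigr => j _.
  rewrite big_distrl /= (sum_if1 a) => [|b Hb]; last by rewrite mxE (ne_false Hb) mulr0 !mul0r.
  by rewrite mxE eqxx mulr1.
under eq_bigr => a _ do rewrite H.
under [RHS]eq_bigr => k1 _ do rewrite !mxE big_distrl /=.
under [RHS]eq_bigr => k1 _ do under eq_bigr => j _ do rewrite !mxE big_distrr big_distrl /=.
rewrite exchange_big /=; apply: eq_bigr => k1 _.
by rewrite exchange_big /=.
Qed.

Lemma ptr1_cyc (w : 'M[C]_q) (X : 'M[C]_(q * q)) :
  ptr1 (kron w 1%:M *m X) = ptr1 (X *m kron w 1%:M).
Proof.
apply/matrixP => m n; rewrite !mxE.
under eq_bigr do rewrite kronmulE.
under [RHS]eq_bigr do rewrite mulkronE.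
have H1 : forall i, \sum_j \sum_b w i j * (1%:M : 'M[C]_q) m b * X (pidx j b) (pidx i n)
   = \sum_j w i j * X (pidx j m) (pidx i n).
  move=> i; apply: eq_bigr => j _.
  rewrite (sum_if1 m) => [|b Hb]; last by rewrite mxE (ne_false Hb) mulr0 mul0r.
  by rewrite mxE eqxx mulr1.
have H2 : forall i, \sum_j \sum_a X (pidx i m) (pidx j a) * (w j i * (1%:M : 'M[C]_q) a n)
   = \sum_j X (pidx i m) (pidx j n) * w j i.
  move=> i; apply: eq_bigr => j _.
  rewrite (sum_if1 n) => [|a Ha]; last by rewrite mxE (negbTE Ha) !mulr0.
  by rewrite mxE eqxx mulr1.
under eq_bigr => i _ do rewrite H1.
under [RHS]eq_bigr => i _ do rewrite H2.
rewrite [RHS]exchange_big /=; apply: eq_bigr => i _; apply: eq_bigr => j _.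
by rewrite mulrC.
Qed.

Lemma ptr2_cyc (w : 'M[C]_q) (X : 'M[C]_(q * q)) :
  ptr2 (kron 1%:M w *m X) = ptr2 (X *m kron 1%:M w).
Proof.
apply/matrixP => m n; rewrite !mxE.
under eq_bigr do rewrite kronmulE.
under [RHS]eq_bigr do rewrite mulkronE.
have H1 : forall a, \sum_j \sum_b (1%:M : 'M[C]_q) m j * w a b * X (pidx j b) (pidx n a)
   = \sum_b w a b * X (pidx m b) (pidx n a).
  move=> a; rewrite (sum_if1 m) => [|j Hj]; last first.
    by apply: big1 => b _; rewrite mxE (ne_false Hj) !mul0r.
  by apply: eq_bigr => b _; rewrite mxE eqxx mul1r.
have H2 : forall a, \sum_i \sum_b X (pidx m a) (pidx i b) * ((1%:M : 'M[C]_q) i n * w b a)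
   = \sum_b X (pidx m a) (pidx n b) * w b a.
  move=> a; rewrite (sum_if1 n) => [|i Hi]; last first.
    by apply: big1 => b _; rewrite mxE (negbTE Hi) mul0r mulr0.
  by apply: eq_bigr => b _; rewrite mxE eqxx mul1r.
under eq_bigr => a _ do rewrite H1.
under [RHS]eq_bigr => a _ do rewrite H2.
rewrite [RHS]exchange_big /=; apply: eq_bigr => i _; apply: eq_bigr => j _.
by rewrite mulrC.
Qed.


Lemma adj_loc (U : 'M[C]_(q * q)) u1 u2 v1 v2 :
  adj (kron u1 u2 *m U *m kron v1 v2) =
  kron (adjq v1) (adjq v2) *m adj U *m kron (adjq u1) (adjq u2).
Proof. by rewrite !adjM !kron_adj mulmxA. Qed.

Lemma Mplus_loc (U : 'M[C]_(q * q)) u1 u2 v1 v2 x :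
  adjq u2 *m u2 = 1%:M -> v1 *m adjq v1 = 1%:M ->
  Mplus (kron u1 u2 *m U *m kron v1 v2) x =
  adjq v2 *m Mplus U (adjq u1 *m x *m u1) *m v2.
Proof.
move=> Hu2 Hv1; rewrite /Mplus adj_loc.
have mid : kron (adjq u1) (adjq u2) *m kron x 1%:M *m kron u1 u2
           = kron (adjq u1 *m x *m u1) 1%:M by rewrite !kronM mulmx1 Hu2.
set Y0 := adj U *m kron (adjq u1 *m x *m u1) 1%:M *m U.
have E : kron (adjq v1) (adjq v2) *m adj U *m kron (adjq u1) (adjq u2) *m kron x 1%:M *m
           (kron u1 u2 *m U *m kron v1 v2)
   = kron 1%:M (adjq v2) *m (kron (adjq v1) 1%:M *m (Y0 *m kron v1 1%:M)) *m kron 1%:M v2.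
  rewrite /Y0 -mid !mulmxA kronM mul1mx mulmx1.
  by rewrite -[_ *m kron v1 1%:M *m kron 1%:M v2]mulmxA kronM mul1mx mulmx1.
rewrite E ptr1_lr ptr1_cyc -[Y0 *m _ *m _]mulmxA kronM Hv1 mulmx1 kron11 mulmx1.
by rewrite -scalemxAr -scalemxAl.
Qed.

Lemma Mminus_loc (U : 'M[C]_(q * q)) u1 u2 v1 v2 x :
  adjq u1 *m u1 = 1%:M -> v2 *m adjq v2 = 1%:M ->
  Mminus (kron u1 u2 *m U *m kron v1 v2) x =
  adjq v1 *m Mminus U (adjq u2 *m x *m u2) *m v1.
Proof.
move=> Hu1 Hv2; rewrite /Mminus adj_loc.
have mid : kron (adjq u1) (adjq u2) *m kron 1%:M x *m kron u1 u2
           = kron 1%:M (adjq u2 *m x *m u2) by rewrite !kronM mulmx1 Hu1.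
set Y0 := adj U *m kron 1%:M (adjq u2 *m x *m u2) *m U.
have E : kron (adjq v1) (adjq v2) *m adj U *m kron (adjq u1) (adjq u2) *m kron 1%:M x *m
           (kron u1 u2 *m U *m kron v1 v2)
   = kron (adjq v1) 1%:M *m (kron 1%:M (adjq v2) *m (Y0 *m kron 1%:M v2)) *m kron v1 1%:M.
  rewrite /Y0 -mid !mulmxA kronM mul1mx mulmx1.
  by rewrite -[_ *m kron 1%:M v2 *m kron v1 1%:M]mulmxA kronM mul1mx mulmx1.
rewrite E ptr2_lr ptr2_cyc -[Y0 *m _ *m _]mulmxA kronM Hv2 mulmx1 kron11 mulmx1.
by rewrite -scalemxAr -scalemxAl.
Qed.


Lemma sand_delta X Y j l a b : (X *m delta_mx j l *m Y) a b = X a j * Y l b.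
Proof.
rewrite mxE (sum_if1 l) => [|k Hk]; last first.
  rewrite mxE big1 ?mul0r // => k' _; by rewrite mxE (negbTE Hk) andbF mulr0.
rewrite mxE (sum_if1 j) => [|k' Hk']; last by rewrite mxE (negbTE Hk') mulr0.
by rewrite mxE !eqxx mulr1.
Qed.

Definition fro (A : 'M[C]_q) : C := \tr (adjq A *m A).

Lemma froE A : fro A = \sum_i \sum_k (A k i)^* * A k i.
Proof.
rewrite /fro /mxtrace; apply: eq_bigr => i _; rewrite mxE.
by apply: eq_bigr => k _; rewrite adjqE.
Qed.

Lemma adjqK A : adjq (adjq A) = A.
Proof. exact: trmxCK. Qed.

Lemma fro_outer v B : v *m adjq v = 1%:M -> fro (adjq v *m B *m v) = fro B.
Proof.
move=> Hv; rewrite /fro.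
have -> : adjq (adjq v *m B *m v) *m (adjq v *m B *m v) = adjq v *m (adjq B *m B) *m v.
  rewrite !adjqM adjqK !mulmxA.
  by rewrite -[_ *m v *m adjq v]mulmxA Hv mulmx1.
by rewrite mxtrace_mulC [v *m _]mulmxA Hv mul1mx.
Qed.

Lemma fro_conj (u uc g : 'M[C]_q) : adjq u *m u = 1%:M -> (forall i k, uc i k = (u i k)^*) ->
  fro (uc *m g *m u^T) = fro g.
Proof.
move=> Hu Huc; rewrite /fro.
have Hc1 : adjq (u^T) = uc by apply/matrixP => i k; rewrite !mxE Huc.
have Hc2 : adjq uc = u^T by apply/matrixP => i k; rewrite !mxE Huc conjCK.
have H1 : u^T *m uc = 1%:M.
  apply/matrixP => i k; have := congr1 (fun M : 'M[C]_q => (M i k)^*) Hu.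
  rewrite !mxE rmorph_sum /= rmorph_nat => <-.
  by apply: eq_bigr => j _; rewrite !mxE Huc rmorphM /= conjCK.
rewrite !adjqM Hc1 Hc2 !mulmxA -[_ *m u^T *m uc]mulmxA H1 mulmx1.
by rewrite mxtrace_mulC !mulmxA H1 mul1mx.
Qed.

Lemma sum4_swap (F : 'I_q -> 'I_q -> 'I_q -> 'I_q -> C) :
  \sum_a \sum_b \sum_c \sum_d F a b c d = \sum_c \sum_d \sum_a \sum_b F a b c d.
Proof.
under eq_bigr do rewrite exchange_big.
rewrite exchange_big.
under eq_bigr do under eq_bigr do rewrite exchange_big.
under eq_bigr do rewrite exchange_big.
by [].
Qed.

Lemma hs2_fro (N : 'M[C]_q -> 'M[C]_q) :
  hs2 N = \sum_j \sum_l fro (N (delta_mx j l)).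
Proof. by []. Qed.

Lemma eq_hs2 (N N' : 'M[C]_q -> 'M[C]_q) : (forall x, N x = N' x) -> hs2 N = hs2 N'.
Proof. by move=> H; rewrite /hs2; apply: eq_bigr => j _; apply: eq_bigr => l _; rewrite H. Qed.

Lemma hs2_outer (N : 'M[C]_q -> 'M[C]_q) v : v *m adjq v = 1%:M ->
  hs2 (fun x => adjq v *m N x *m v) = hs2 N.
Proof.
move=> Hv; rewrite !hs2_fro; apply: eq_bigr => j _; apply: eq_bigr => l _.
exact: fro_outer.
Qed.

Definition linexp (N : 'M[C]_q -> 'M[C]_q) :=
  forall x, N x = \sum_a \sum_b x a b *: N (delta_mx a b).

Lemma hs2_inner (N : 'M[C]_q -> 'M[C]_q) u : linexp N -> adjq u *m u = 1%:M ->
  hs2 (fun x => N (adjq u *m x *m u)) = hs2 N.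
Proof.
move=> HN Hu; rewrite !hs2_fro.
under eq_bigr do under eq_bigr do rewrite froE.
under [RHS]eq_bigr do under eq_bigr do rewrite froE.
rewrite sum4_swap [RHS]sum4_swap; apply: eq_bigr => i _; apply: eq_bigr => k _.
set g := \matrix_(a, b) N (delta_mx a b) k i.
set uc := \matrix_(a, b) (u a b)^*.
have HY : forall j l, N (adjq u *m delta_mx j l *m u) k i = (uc *m g *m u^T) j l.
  move=> j l; rewrite HN !summxE mxE.
  under eq_bigr do rewrite summxE.
  under eq_bigr do under eq_bigr do rewrite mxE sand_delta adjqE.
  rewrite exchange_big; apply: eq_bigr => b _; rewrite !mxE big_distrl /=.
  by apply: eq_bigr => a _; rewrite !mxE; ring.
under eq_bigr do under eq_bigr do rewrite HY.
have -> : \sum_j \sum_l ((uc *m g *m u^T) j l)^* * (uc *m g *m u^T) j l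
   = fro (uc *m g *m u^T) by rewrite froE exchange_big.
rewrite fro_conj //; last by move=> a b; rewrite mxE.
rewrite froE exchange_big; apply: eq_bigr => j _; apply: eq_bigr => l _.
by rewrite /g mxE.
Qed.

Definition linN (N : 'M[C]_q -> 'M[C]_q) :=
  forall k x y, N (k *: x + y) = k *: N x + N y.

Lemma linexpP N : linN N -> linexp N.
Proof.
move=> HN x.
have N0 : N 0 = 0.
  have := HN 1 0 0; rewrite scaler0 addr0 scale1r.
  by move=> /(congr1 (fun z => z - N 0)); rewrite subrr addrK => H; rewrite -H.
have NA : forall x y, N (x + y) = N x + N y.
  by move=> x1 y1; rewrite -{1}[x1]scale1r HN scale1r.
have NZ : forall k x, N (k *: x) = k *: N x.
  by move=> k x1; rewrite -[k *: x1]addr0 HN N0 addr0.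
rewrite {1}(matrix_sum_delta x) (big_morph N NA N0); apply: eq_bigr => a _.
by rewrite (big_morph N NA N0); apply: eq_bigr => b _; rewrite NZ.
Qed.

Lemma kron_linl B k x y :
  kron (k *: x + y) B = k *: kron x B + kron y B.
Proof.
apply/matrixP => r c; have [i [a ->]] := pidxP r; have [j [b ->]] := pidxP c.
by rewrite !mxE !kronE !mxE mulrDl mulrA.
Qed.

Lemma kron_linr A k x y :
  kron A (k *: x + y) = k *: kron A x + kron A y.
Proof.
apply/matrixP => r c; have [i [a ->]] := pidxP r; have [j [b ->]] := pidxP c.
rewrite !mxE !kronE !mxE mulrDr; congr (_ + _); ring.
Qed.

Lemma ptr1_lin k (X Y : 'M[C]_(q * q)) : ptr1 (k *: X + Y) = k *: ptr1 X + ptr1 Y.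
Proof.
apply/matrixP => m n; rewrite !mxE mulr_sumr -big_split /=.
by apply: eq_bigr => i _; rewrite !mxE.
Qed.

Lemma ptr2_lin k (X Y : 'M[C]_(q * q)) : ptr2 (k *: X + Y) = k *: ptr2 X + ptr2 Y.
Proof.
apply/matrixP => m n; rewrite !mxE mulr_sumr -big_split /=.
by apply: eq_bigr => i _; rewrite !mxE.
Qed.

Lemma Mplus_lin (U : 'M[C]_(q * q)) : linN (Mplus U).
Proof.
move=> k x y; rewrite /Mplus kron_linl mulmxDr mulmxDl -scalemxAr -scalemxAl ptr1_lin.
by rewrite scalerDr !scalerA mulrC.
Qed.

Lemma Mminus_lin (U : 'M[C]_(q * q)) : linN (Mminus U).
Proof.
move=> k x y; rewrite /Mminus kron_linr mulmxDr mulmxDl -scalemxAr -scalemxAl ptr2_lin.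
by rewrite scalerDr !scalerA mulrC.
Qed.

Lemma Pmap_lin : linN (@Pmap C q).
Proof.
move=> k x y; rewrite /Pmap mxtraceD mxtraceZ mulrDl scalerDl scalerA mulrA.
by [].
Qed.

Lemma linN_sub N1 N2 : linN N1 -> linN N2 -> linN (fun x => N1 x - N2 x).
Proof.
move=> H1 H2 k x y; rewrite H1 H2 scalerBr opprD addrACA.
by [].
Qed.


Lemma mulswapE (X : 'M[C]_(q * q)) r j b : (X *m swapq C q) r (pidx j b) = X r (pidx b j).
Proof.
rewrite mulpE (sum_if1 b) => [|k Hk]; last first.
  by apply: big1 => c _; rewrite swapE (negbTE Hk) mulr0.
rewrite (sum_if1 j) => [|c Hc]; last by rewrite swapE (negbTE Hc) andbF mulr0.
by rewrite swapE !eqxx mulr1.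
Qed.

Lemma WE (U : 'M[C]_(q * q)) i a j b :
  realign (U *m swapq C q) (pidx b a) (pidx j i) = U (pidx i a) (pidx b j).
Proof. by rewrite realignE mulswapE. Qed.

Lemma sand_d1 (P Q : 'M[C]_(q * q)) j l x y :
  (P *m kron (delta_mx j l) 1%:M *m Q) x y = \sum_a P x (pidx j a) * Q (pidx l a) y.
Proof.
rewrite mulpE.
under eq_bigr => l1 _ do under eq_bigr => a2 _ do rewrite mulkronE.
rewrite (sum_if1 l) => [|l1 Hl]; last first.
  apply: big1 => a2 _; rewrite big1 ?mul0r // => j1 _; apply: big1 => a1 _.
  by rewrite !mxE (negbTE Hl) andbF mul0r mulr0.
apply: eq_bigr => a2 _; congr (_ * _).
rewrite (sum_if1 j) => [|j1 Hj]; last first.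
  by apply: big1 => a1 _; rewrite !mxE (negbTE Hj) /= !mul0r mulr0.
rewrite (sum_if1 a2) => [|a1 Ha]; last by rewrite !mxE (negbTE Ha) !mulr0.
by rewrite !mxE !eqxx !mulr1.
Qed.

Lemma sand_d2 (P Q : 'M[C]_(q * q)) j l x y :
  (P *m kron 1%:M (delta_mx j l) *m Q) x y = \sum_i P x (pidx i j) * Q (pidx i l) y.
Proof.
rewrite mulpE; apply: eq_bigr => l1 _.
under eq_bigr => a2 _ do rewrite mulkronE.
rewrite (sum_if1 l) => [|a2 Ha]; last first.
  rewrite big1 ?mul0r // => j1 _; apply: big1 => a1 _.
  by rewrite !mxE (negbTE Ha) andbF mulr0 mulr0.
congr (_ * _).
rewrite (sum_if1 l1) => [|j1 Hj]; last first.
  by apply: big1 => a1 _; rewrite !mxE (negbTE Hj) /= !mul0r mulr0.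
rewrite (sum_if1 j) => [|a1 Ha]; last by rewrite !mxE (negbTE Ha) /= !mulr0.
by rewrite !mxE !eqxx !mulr1.
Qed.

Definition Kp (U : 'M[C]_(q * q)) j l m n :=
  \sum_i \sum_a (U (pidx j a) (pidx i m))^* * U (pidx l a) (pidx i n).
Definition Km (U : 'M[C]_(q * q)) j l m n :=
  \sum_a \sum_i (U (pidx i j) (pidx m a))^* * U (pidx i l) (pidx n a).

Lemma MplusE U j l m n : Mplus U (delta_mx j l) m n = q%:R^-1 * Kp U j l m n.
Proof.
rewrite /Mplus !mxE; congr (_ * _); apply: eq_bigr => i _.
by rewrite sand_d1; apply: eq_bigr => a _; rewrite adjE.
Qed.

Lemma MminusE U j l m n : Mminus U (delta_mx j l) m n = q%:R^-1 * Km U j l m n.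
Proof.
rewrite /Mminus !mxE; congr (_ * _); apply: eq_bigr => a _.
by rewrite sand_d2; apply: eq_bigr => i _; rewrite adjE.
Qed.

Lemma trsq (M : 'M[C]_(q * q)) :
  \tr (M *m M) = \sum_x1 \sum_x2 \sum_y1 \sum_y2
     M (pidx x1 x2) (pidx y1 y2) * M (pidx y1 y2) (pidx x1 x2).
Proof.
rewrite /mxtrace sum_pidx; apply: eq_bigr => x1 _; apply: eq_bigr => x2 _.
by rewrite mulpE.
Qed.

Lemma permA (F : 'I_q -> 'I_q -> 'I_q -> 'I_q -> C) :
  \sum_r \sum_j \sum_c \sum_l F r j c l = \sum_j \sum_l \sum_c \sum_r F r j c l.
Proof.
rewrite exchange_big; apply: eq_bigr => j _.
rewrite exchange_big.
under eq_bigr do rewrite exchange_big.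
by rewrite exchange_big.
Qed.

Lemma permB (F : 'I_q -> 'I_q -> 'I_q -> 'I_q -> C) :
  \sum_c \sum_l \sum_r \sum_j F r j c l = \sum_j \sum_l \sum_c \sum_r F r j c l.
Proof.
under eq_bigr => c _ do under eq_bigr => l _ do rewrite exchange_big.
under eq_bigr => c _ do rewrite exchange_big.
rewrite exchange_big; apply: eq_bigr => j _.
by rewrite exchange_big.
Qed.

Lemma conj_qinv : ((q%:R : C)^-1)^* = q%:R^-1.
Proof. by rewrite fmorphV /= conjC_nat. Qed.

Lemma hs2_Mplus U :
  hs2 (Mplus U) = (q%:R ^+ 2)^-1 *
    \tr ((realign (U *m swapq C q) *m adj (realign (U *m swapq C q))) ^+ 2).
Proof.
set W := realign (U *m swapq C q).
have -> : \tr ((W *m adj W) ^+ 2) = \tr ((adj W *m W) *m (adj W *m W)).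
  by rewrite expr2 -mulmxE -[W *m adj W *m _]mulmxA mxtrace_mulC !mulmxA.
have AE : forall m j n l, (adj W *m W) (pidx m j) (pidx n l) = Kp U j l m n.
  move=> m j n l; rewrite mulpE; apply: eq_bigr => b _; apply: eq_bigr => a _.
  by rewrite adjE !WE.
have Kc : forall j l m n, Kp U l j n m = (Kp U j l m n)^*.
  move=> j l m n; rewrite /Kp rmorph_sum; apply: eq_bigr => i _.
  rewrite rmorph_sum; apply: eq_bigr => a _; by rewrite rmorphM /= conjCK mulrC.
rewrite trsq.
under eq_bigr do under eq_bigr do under eq_bigr do under eq_bigr do rewrite !AE.
rewrite permA hs2_fro mulr_sumr; apply: eq_bigr => j _.
rewrite mulr_sumr; apply: eq_bigr => l _.
rewrite froE mulr_sumr; apply: eq_bigr => c _.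
rewrite mulr_sumr; apply: eq_bigr => r _.
rewrite !MplusE rmorphM /= conj_qinv -exprVn (Kc j l r c); ring.
Qed.

Lemma hs2_Mminus U :
  hs2 (Mminus U) = (q%:R ^+ 2)^-1 *
    \tr ((realign (U *m swapq C q) *m adj (realign (U *m swapq C q))) ^+ 2).
Proof.
set W := realign (U *m swapq C q).
rewrite [in \tr _]expr2 -mulmxE.
have BE : forall n l m j, (W *m adj W) (pidx n l) (pidx m j) = Km U j l m n.
  move=> n l m j; rewrite mulpE /Km; apply: eq_bigr => a _; apply: eq_bigr => i _.
  by rewrite adjE !WE mulrC.
have Kc : forall j l m n, (W *m adj W) (pidx m j) (pidx n l) = (Km U j l m n)^*.
  move=> j l m n; rewrite mulpE /Km rmorph_sum; apply: eq_bigr => a _.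
  rewrite rmorph_sum; apply: eq_bigr => i _; by rewrite adjE !WE rmorphM /= conjCK.
rewrite trsq.
under eq_bigr do under eq_bigr do under eq_bigr do under eq_bigr do rewrite BE Kc.
rewrite permB hs2_fro mulr_sumr; apply: eq_bigr => j _.
rewrite mulr_sumr; apply: eq_bigr => l _.
rewrite froE mulr_sumr; apply: eq_bigr => c _.
rewrite mulr_sumr; apply: eq_bigr => r _.
rewrite !MminusE rmorphM /= conj_qinv -exprVn; ring.
Qed.


Lemma adjqB X Y : adjq (X - Y) = adjq X - adjq Y.
Proof. by apply/matrixP => i k; rewrite !mxE rmorphB. Qed.

Lemma adjqZ c X : adjq (c *: X) = c^* *: adjq X.
Proof. by apply/matrixP => i k; rewrite !mxE rmorphM. Qed.

Lemma adjq1 : adjq (1%:M : 'M[C]_q) = 1%:M.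
Proof.
apply/matrixP => i k; rewrite !mxE eq_sym; case: (i == k) => /=; [exact: rmorph1 | exact: rmorph0].
Qed.

Lemma tr_adjq X : \tr (adjq X) = (\tr X)^*.
Proof. by rewrite /mxtrace rmorph_sum; apply: eq_bigr => i _; rewrite adjqE. Qed.

Lemma fro_sub X Y :
  fro (X - Y) = fro X - \tr (adjq X *m Y) - \tr (adjq Y *m X) + fro Y.
Proof.
rewrite /fro adjqB mulmxBl !mulmxBr !raddfB /=.
by ring.
Qed.

Lemma tr_delta j l : \tr (delta_mx j l : 'M[C]_q) = (j == l)%:R.
Proof.
rewrite /mxtrace (sum_if1 j) => [|i Hi]; last by rewrite mxE (negbTE Hi).
by rewrite mxE eqxx /= eq_sym.
Qed.

Lemma Pmap_delta j l : Pmap (delta_mx j l : 'M[C]_q) = ((j == l)%:R / q%:R) *: 1%:M.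
Proof. by rewrite /Pmap tr_delta. Qed.

Lemma collapse_c (G : 'I_q -> C) j : \sum_l ((j == l)%:R / q%:R) * G l = q%:R^-1 * G j.
Proof.
rewrite (sum_if1 j) => [|l Hl]; last by rewrite (ne_false Hl) mul0r mul0r.
by rewrite eqxx mul1r.
Qed.

Lemma collapse_b (G : 'I_q -> C) j : \sum_l (j == l)%:R * G l = G j.
Proof.
rewrite (sum_if1 j) => [|l Hl]; last by rewrite (ne_false Hl) mul0r.
by rewrite eqxx mul1r.
Qed.

Lemma conj_c (j l : 'I_q) : (((j == l)%:R / q%:R : C))^* = (j == l)%:R / q%:R.
Proof. by rewrite fmorph_div /= !conjC_nat. Qed.

Lemma sumtrM (U : 'M[C]_(q * q)) : (q%:R : C) != 0 -> adj U *m U = 1%:M ->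
  \sum_j \tr (Mplus U (delta_mx j j)) = q%:R.
Proof.
move=> qn0 HU; rewrite /mxtrace.
under eq_bigr do under eq_bigr do rewrite MplusE.
rewrite exchange_big /=.
have H : forall m, \sum_j q%:R^-1 * Kp U j j m m = q%:R^-1 * q%:R.
  move=> m; rewrite -mulr_sumr; congr (_ * _); rewrite /Kp exchange_big /=.
  have -> : \sum_i \sum_j \sum_a (U (pidx j a) (pidx i m))^* * U (pidx j a) (pidx i m)
         = \sum_(i < q) (1 : C).
    apply: eq_bigr => i _.
    have -> : (1 : C) = (1%:M : 'M[C]_(q * q)) (pidx i m) (pidx i m) by rewrite id_pE !eqxx.
    by rewrite -HU mulpE; apply: eq_bigr => j _; apply: eq_bigr => a _; rewrite adjE.
  by rewrite sumr_const card_ord.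
under eq_bigr do rewrite H.
by rewrite sumr_const card_ord -mulr_natl mulVf // mulr1.
Qed.

Lemma hs2_MP (U : 'M[C]_(q * q)) : (0 < q)%N -> adj U *m U = 1%:M ->
  hs2 (fun x => Mplus U x - Pmap x) = hs2 (Mplus U) - 1.
Proof.
move=> q0 HU.
have qn0 : (q%:R : C) != 0 by rewrite pnatr_eq0 -lt0n.
rewrite !hs2_fro.
under eq_bigr do under eq_bigr do rewrite fro_sub.
have X1 : \sum_j \sum_l \tr (adjq (Mplus U (delta_mx j l)) *m Pmap (delta_mx j l)) = 1.
  under eq_bigr do under eq_bigr do rewrite Pmap_delta -scalemxAr mxtraceZ mulmx1 tr_adjq.
  under eq_bigr do rewrite collapse_c.
  rewrite -mulr_sumr (_ : \sum_i _ = (\sum_i \tr (Mplus U (delta_mx i i)))^*); last by rewrite rmorph_sum.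
  by rewrite sumtrM // conjC_nat mulVf.
have X2 : \sum_j \sum_l \tr (adjq (Pmap (delta_mx j l)) *m Mplus U (delta_mx j l)) = 1.
  under eq_bigr do under eq_bigr do rewrite Pmap_delta adjqZ adjq1 conj_c -scalemxAl mxtraceZ mul1mx.
  under eq_bigr do rewrite collapse_c.
  by rewrite -mulr_sumr sumtrM // mulVf.
have X3 : \sum_j \sum_l fro (Pmap (delta_mx j l)) = 1.
  under eq_bigr do under eq_bigr do rewrite Pmap_delta /fro adjqZ adjq1 conj_c -scalemxAl mxtraceZ mul1mx mxtraceZ mxtrace1 -mulrA.
  under eq_bigr do rewrite collapse_b eqxx.
  rewrite sumr_const card_ord -[_ *+ q]mulr_natl.
  by rewrite /= mulr1n; field.
under eq_bigr do rewrite big_split /= !sumrB.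
rewrite big_split /= !sumrB X1 X2 X3.
by ring.
Qed.


Lemma realign_swap : realign (swapq C q) = swapq C q.
Proof.
apply/matrixP => r c; have [b [a ->]] := pidxP r; have [j [i ->]] := pidxP c.
by rewrite realignE !swapE eq_sym.
Qed.

Lemma swap_unit : swapq C q *m adj (swapq C q) = 1%:M.
Proof.
apply/matrixP => r c; have [x [y ->]] := pidxP r; have [z [w ->]] := pidxP c.
rewrite mulpE id_pE (sum_if1 y) => [|k Hk]; last first.
  by apply: big1 => c0 _; rewrite swapE (ne_false Hk) andbF mul0r.
rewrite (sum_if1 x) => [|c0 Hc]; last by rewrite swapE (ne_false Hc) mul0r.
rewrite adjE !swapE !eqxx mul1r conjC_nat.
by rewrite [z == x]eq_sym [w == y]eq_sym.
Qed.

Lemma opEnt_unit (U : 'M[C]_(q * q)) :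
  realign U *m adj (realign U) = 1%:M ->
  opEnt U = 1 - (q%:R ^+ 4)^-1 * (q%:R ^+ 2).
Proof.
move=> H; rewrite /opEnt H expr2 -mulmxE mulmx1 mxtrace1 natrM.
by rewrite expr2.
Qed.

End Infra.

Theorem mainTheorem2 (C : numClosedFieldType) (q : nat) (hq : (2 <= q)%N)
    (U : 'M[C]_(q * q)) (hU : dual_unitary U) :
  [/\ hs2 (Mplus U) = 1 + (q%:R ^+ 2 - 1) * (1 - entPower U),
      hs2 (Mminus U) = 1 + (q%:R ^+ 2 - 1) * (1 - entPower U),
      hs2 (fun x => Mplus U x - Pmap x) = (q%:R ^+ 2 - 1) * (1 - entPower U)
    & forall u1 u2 v1 v2 : 'M[C]_q,
        u1 \is unitarymx -> u2 \is unitarymx ->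
        v1 \is unitarymx -> v2 \is unitarymx ->
        let U' := kron u1 u2 *m U *m kron v1 v2 in
        [/\ hs2 (Mplus U') = hs2 (Mplus U),
            hs2 (Mminus U') = hs2 (Mminus U)
          & hs2 (fun x => Mplus U' x - Pmap x) = hs2 (fun x => Mplus U x - Pmap x)]].
Proof.
have q0 : (0 < q)%N by apply: leq_trans hq.
have qn0 : (q%:R : C) != 0 by rewrite pnatr_eq0 -lt0n.
have q2n : (q%:R ^+ 2 - 1 : C) != 0.
  rewrite subr_eq0 expr2 -natrM pnatr_eq1; apply/eqP; nia.
case: hU => hUu hRu.
have HadjU : adj U *m U = 1%:M.
  by have := trmxC_unitary U; rewrite hUu => /unitarymxP; rewrite trmxCK.
have HR : realign U *m adj (realign U) = 1%:M by apply/unitarymxP.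
have HS : realign (swapq C q) *m adj (realign (swapq C q)) = 1%:M.
  by rewrite realign_swap swap_unit.
set T := \tr ((realign (U *m swapq C q) *m adj (realign (U *m swapq C q))) ^+ 2).
have Hep : 1 + (q%:R ^+ 2 - 1) * (1 - entPower U) = (q%:R ^+ 2)^-1 * T.
  rewrite /entPower (opEnt_unit _ _ _ HR) (opEnt_unit _ _ _ HS) /opEnt -/T.
  by field; rewrite qn0 q2n.
have Hunit : forall w : 'M[C]_q, w \is unitarymx ->
    w *m adjq w = 1%:M /\ adjq w *m w = 1%:M.
  move=> w Hw; split; first by apply/unitarymxP.
  by have := trmxC_unitary w; rewrite Hw => /unitarymxP; rewrite trmxCK.
have H3 : hs2 (fun x => Mplus U x - Pmap x) = hs2 (Mplus U) - 1.
  exact: hs2_MP.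
split.
- by rewrite hs2_Mplus -/T Hep.
- by rewrite hs2_Mminus -/T Hep.
- by rewrite H3 hs2_Mplus -/T -Hep addrAC subrr add0r.
move=> u1 u2 v1 v2 Hu1 Hu2 Hv1 Hv2 U'.
have [Hu1a Hu1b] := Hunit _ Hu1; have [Hu2a Hu2b] := Hunit _ Hu2.
have [Hv1a Hv1b] := Hunit _ Hv1; have [Hv2a Hv2b] := Hunit _ Hv2.
split.
- rewrite (eq_hs2 _ _ _ (fun x => adjq v2 *m Mplus U (adjq u1 *m x *m u1) *m v2)); last first.
    by move=> x; apply: Mplus_loc.
  rewrite (hs2_outer _ _ (fun x => Mplus U (adjq u1 *m x *m u1))) //.
  by rewrite hs2_inner //; apply: linexpP; apply: Mplus_lin.
- rewrite (eq_hs2 _ _ _ (fun x => adjq v1 *m Mminus U (adjq u2 *m x *m u2) *m v1)); last first.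
    by move=> x; apply: Mminus_loc.
  rewrite (hs2_outer _ _ (fun x => Mminus U (adjq u2 *m x *m u2))) //.
  by rewrite hs2_inner //; apply: linexpP; apply: Mminus_lin.
- rewrite (eq_hs2 _ _ _ (fun x => adjq v2 *m
      ((fun y => Mplus U y - Pmap y) (adjq u1 *m x *m u1)) *m v2)); last first.
    move=> x; rewrite /U' Mplus_loc // /= mulmxBr mulmxBl; congr (_ - _).
    rewrite /Pmap -scalemxAr -scalemxAl mulmx1 Hv2b.
    by rewrite mxtrace_mulC mulmxA Hu1a mul1mx.
  rewrite (hs2_outer _ _ (fun x => (fun y => Mplus U y - Pmap y) (adjq u1 *m x *m u1))) //.
  rewrite (hs2_inner _ _ (fun y => Mplus U y - Pmap y)) //.
  by apply: linexpP; apply: linN_sub; [apply: Mplus_lin | apply: Pmap_lin].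
Qed.
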